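(* Let $g\colon A\to D$ and $h\colon B\to D$ be lattice epimorphisms, where $A$ and $B$ are lattices with top and bottom elements $0_A,1_A,0_B,1_B$. If the fiber product $\{(a,b)\in A\times B: g(a)=h(b)\}$ is generated as a lattice by a set $G$, then $\{(a,b)\in A\times B: g(a)\le h(b)\}$ is generated as a lattice by $G\cup\{(0_A,1_B)\}$. In particular, if the fiber product is finitely generated, so is the latter sublattice. *)

(* Defs.v *)
From HB Require Import structures.
From mathcomp Require Import all_boot all_order.
Set Implicit Arguments. Unset Strict Implicit. Unset Printing Implicit Defensive.
Import Order.TTheory.
Local Open Scope order_scope.

Definition lattice_hom d d' (L : latticeType d) (M : latticeType d') (f : L -> M) :=
  (forall x y, f (x `&` y) = f x `&` f y) /\ (forall x y, f (x `|` y) = f x `|` f y).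

Definition lattice_epi d d' (L : latticeType d) (M : latticeType d') (f : L -> M) :=
  lattice_hom f /\ (forall y, exists x, f x = y).

Inductive pgen d1 d2 (A : latticeType d1) (B : latticeType d2)
    (G : A * B -> Prop) : A * B -> Prop :=
  | pgen_base p : G p -> pgen G p
  | pgen_meet p q : pgen G p -> pgen G q -> pgen G (p.1 `&` q.1, p.2 `&` q.2)
  | pgen_join p q : pgen G p -> pgen G q -> pgen G (p.1 `|` q.1, p.2 `|` q.2).

Definition pgenerated_by d1 d2 (A : latticeType d1) (B : latticeType d2)
    (S G : A * B -> Prop) := forall p, S p <-> pgen G p.

Definition pfinitely_generated d1 d2 (A : latticeType d1) (B : latticeType d2)
    (S : A * B -> Prop) := exists s : seq (A * B), pgenerated_by S (fun p => p \in s).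

(* Main.v *)
Require Import Defs.
From HB Require Import structures.
From mathcomp Require Import all_boot all_order.
Import Order.TTheory.
Local Open Scope order_scope.

Lemma pgen_mono d1 d2 (A : latticeType d1) (B : latticeType d2) (G H : A * B -> Prop) :
  (forall p, G p -> pgen H p) -> forall p, pgen G p -> pgen H p.
Proof.
move=> GH p; elim=> [q /GH //|q r _ Hq _ Hr|q r _ Hq _ Hr].
- exact: pgen_meet.
- exact: pgen_join.
Qed.

Lemma part1 (d1 d2 d3 : Order.disp_t) (A : tbLatticeType d1) (B : tbLatticeType d2)
    (D : latticeType d3) (g : A -> D) (h : B -> D) :
  lattice_epi g -> lattice_epi h ->
  (forall G : A * B -> Prop,
     pgenerated_by (fun p => g p.1 = h p.2) G ->
     pgenerated_by (fun p => g p.1 <= h p.2)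
       (fun p => G p \/ p = (\bot, \top))).
Proof.
move=> [[gI gU] gS] [[hI hU] hS] G HG p; split.
- case: p => a b /= le_ab.
  have [b' hb'] := gS (h b) .
  have [a' ga'] := gS (h b).
  have [b1 hb1] := hS (g a).
  have e1 : pgen (fun p => G p \/ p = (\bot, \top)) (a, b1 `&` b).
    apply: (@pgen_mono _ _ _ _ G); first by move=> q Gq; apply: pgen_base; left.
    apply/HG => /=; rewrite hI hb1; apply/esym/meet_idPl => //.
  have e2 : pgen (fun p => G p \/ p = (\bot, \top)) (a', b).
    apply: (@pgen_mono _ _ _ _ G); first by move=> q Gq; apply: pgen_base; left.
    by apply/HG.
  have e3 := pgen_meet e2 (@pgen_base _ _ _ _ (fun p => G p \/ p = (\bot, \top)) _ (or_intror (erefl (\bot, \top)))).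
  have := pgen_join e1 e3; rewrite /= meetx0 meetx1 joinx0.
  by rewrite joinC meetC meetKU.
- elim=> [q [Hq|->]|q r _ Hq _ Hr|q r _ Hq _ Hr] /=.
  + by rewrite ((HG q).2 (pgen_base Hq)).
  + have [x gx] := gS (h \top).
    have [y hy] := hS (g \bot).
    apply: (@le_trans _ _ (g x)); last by rewrite gx.
    have -> : g \bot = g (\bot `&` x) by rewrite meet0x.
    by rewrite gI leIr.
  + by rewrite gI hI leI2.
  + by rewrite gU hU leU2.
Qed.

Theorem mainTheorem8 (d1 d2 d3 : Order.disp_t) (A : tbLatticeType d1) (B : tbLatticeType d2)
    (D : latticeType d3) (g : A -> D) (h : B -> D) :
  lattice_epi g -> lattice_epi h ->
  (forall G : A * B -> Prop,
     pgenerated_by (fun p => g p.1 = h p.2) G ->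
     pgenerated_by (fun p => g p.1 <= h p.2)
       (fun p => G p \/ p = (\bot, \top))) /\
  (pfinitely_generated (fun p : A * B => g p.1 = h p.2) ->
   pfinitely_generated (fun p : A * B => g p.1 <= h p.2)).
Proof.
move=> eg eh; split; first exact: part1.
case=> s Hs; exists (rcons s (\bot, \top)) => p.
have E := (@part1 _ _ _ _ _ _ _ _ eg eh _ Hs p); split.
- move=> /(proj1 E); apply: pgen_mono => q Hq; apply: pgen_base.
  by rewrite mem_rcons inE; case: Hq => [->|->]; rewrite ?eqxx ?orbT.
- move=> H; apply: (proj2 E); move: H; apply: pgen_mono => q Hq; apply: pgen_base.
  by move: Hq; rewrite mem_rcons inE => /orP[/eqP->|->]; [right|left].
Qed.
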